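(* Let $N\ge1$ and let $f=|0,\dots,N-1|$, $g=|0,\dots,N-2,N|$, $h=|0,\dots,N-2,N+1|$, $s=|0,\dots,N-3,N-1,N|$ be Casoratians of $\boldsymbol\psi$ (see context), as functions of $(n,m,\beta)$. Then (alternative GD-4 (A-2) bilinear form) $$\widetilde f(p\dot f+\dot g)-(p-b)f\widetilde{\dot f}-(b\widetilde f+\widetilde g)\dot f=0,\qquad \widehat f(q\dot f+\dot g)-(q-b)f\widehat{\dot f}-(b\widehat f+\widehat g)\dot f=0,$$ $$\widetilde f(b^2\dot f-b\dot g+\dot h)+p\widetilde f(\dot g-b\dot f)-(p-b)f(\widetilde{\dot g}-b\widetilde{\dot f})-\dot f\widetilde h=0,$$ $$\widehat f(b^2\dot f-b\dot g+\dot h)+q\widehat f(\dot g-b\dot f)-(q-b)f(\widehat{\dot g}-b\widehat{\dot f})-\dot f\widehat h=0,$$ $$\widetilde f(pg+h)-\widetilde g(pf+g)+f\widetilde s=0,\qquad \widehat f(qg+h)-\widehat g(qf+g)+f\widehat s=0,$$ $$(p-q)(\widetilde f\widehat f-f\widehat{\widetilde f})+\widetilde f\widehat g-\widehat f\widetilde g=0,$$ $$\big[H(p,q)f\widehat{\widetilde{\dot f}}+s\widehat{\widetilde{\dot f}}+(p+q-\alpha_3)g\widehat{\widetilde{\dot f}}-((p+q-\alpha_3)f+g)(\widehat{\widetilde{\dot g}}-b\widehat{\widetilde{\dot f}})+f(\widehat{\widetilde{\dot h}}-b\widehat{\widetilde{\dot g}}+b^2\widehat{\widetilde{\dot f}})\big](p-q)-p_b\widetilde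 f\widehat{\dot f}+q_b\widehat f\widetilde{\dot f}=0.$$
   Context: Fix $\alpha_1,\alpha_2,\alpha_3\in\mathbb C$, $G(\omega,k)=\omega^4-k^4+\alpha_3(\omega^3-k^3)+\alpha_2(\omega^2-k^2)+\alpha_1(\omega-k)$, $H(p,q)=p^2+pq+q^2-\alpha_3(p+q)+\alpha_2$. Let $p,q,a,b\in\mathbb C$ be pairwise distinct, $p_b=G(-p,-b)/(p-b)$, $q_b=G(-q,-b)/(q-b)$. Fix $N\ge1$, $k_1,\dots,k_N\in\mathbb C$; for each $s$ let $\omega_1(k_s),\dots,\omega_4(k_s)$ be the four roots in $\omega$ of $G(-\omega,-k_s)=0$, with $\omega_4(k_s)=k_s$. For constants $\rho^{(0)}_{j,s}$ let $\psi_s(n,m,\alpha,\beta,l)=\sum_{j=1}^4\rho^{(0)}_{j,s}(-\omega_j(k_s))^l(p-\omega_j(k_s))^n(q-\omega_j(k_s))^m(a-\omega_j(k_s))^\alpha(b-\omega_j(k_s))^\beta$ and $\boldsymbol\psi(l)=(\psi_1,\dots,\psi_N)^T$. Casoratian notation: $|l_1,\dots,l_N|=\det(\boldsymbol\psi(l_1),\dots,\boldsymbol\psi(l_N))$; a run ''$0,\dots,j$'' with $j<0$ is empty, and if the listed indices number more than $N$ the symbol is $0$. Shifts: $\widetilde F=F(n+1,m,\beta)$, $\widehat F=F(n,m+1,\beta)$, $\dot F=F(n,m,\beta+1)$, composed as needed. *)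

(* Defs.v *)
From HB Require Import structures.
From mathcomp Require Import all_boot all_order all_algebra.
From mathcomp Require Import reals complex.
Set Implicit Arguments. Unset Strict Implicit. Unset Printing Implicit Defensive.
Import Order.TTheory GRing.Theory Num.Theory.
Local Open Scope ring_scope.

Section Defs.
Variable C : fieldType.

Definition Gf (a1 a2 a3 w k : C) : C :=
  w ^+ 4 - k ^+ 4 + a3 * (w ^+ 3 - k ^+ 3) + a2 * (w ^+ 2 - k ^+ 2) + a1 * (w - k).

Definition Hf (a2 a3 p q : C) : C := p ^+ 2 + p * q + q ^+ 2 - a3 * (p + q) + a2.

Definition psi (N : nat) (rho om : 'I_N -> 'I_4 -> C) (p q a b : C)
  (n m al be : int) (l : nat) (s : 'I_N) : C :=
  \sum_(j < 4) rho s j * (- om s j) ^+ l * (p - om s j) ^ n * (q - om s j) ^ m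
     * (a - om s j) ^ al * (b - om s j) ^ be.

(* Casoratian |l_1,...,l_k| : determinant with columns psi(l_1),...,psi(l_k);
   zero if the number of listed indices differs from N. *)
Definition casor (N : nat) (rho om : 'I_N -> 'I_4 -> C) (p q a b : C)
  (al : int) (cols : seq nat) (n m be : int) : C :=
  if size cols == N then
    \det (\matrix_(i < N, j < N) psi rho om p q a b n m al be (nth 0%N cols j) i)
  else 0.

Definition cols_f (N : nat) : seq nat := iota 0 N.
Definition cols_g (N : nat) : seq nat := iota 0 N.-1 ++ [:: N].
Definition cols_h (N : nat) : seq nat := iota 0 N.-1 ++ [:: N.+1].
Definition cols_s (N : nat) : seq nat := iota 0 (N - 2) ++ [:: N.-1; N].
End Defs.

(* Main.v *)
Require Import Defs.
From HB Require Import structures.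
From mathcomp Require Import all_boot all_order all_algebra.
From mathcomp Require Import reals complex.
From mathcomp Require Import ring zify.
Import Order.TTheory GRing.Theory Num.Theory.
Set Implicit Arguments. Unset Strict Implicit. Unset Printing Implicit Defensive.
Local Open Scope ring_scope.

Section Dets.
Variables (C : fieldType) (N : nat).
Definition vec := 'I_N -> C.
Definition v0 : vec := fun _ => 0.
Definition Dm (s : seq vec) : 'M[C]_N := \matrix_(i < N, j < N) (nth v0 s j) i.
Definition D (s : seq vec) : C := if size s == N then \det (Dm s) else 0.

Lemma nth_mid (a b : seq vec) x : nth v0 (a ++ x :: b) (size a) = x.
Proof. by rewrite nth_cat ltnn subnn. Qed.

Lemma nth_mid_neq (a b : seq vec) x y j : j != size a ->
  nth v0 (a ++ x :: b) j = nth v0 (a ++ y :: b) j.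
Proof.
move=> hj; rewrite !nth_cat; case: ifP => // hlt.
case E: (j - size a)%N => [|t] //.
move: hj; rewrite eqn_leq -subn_eq0 E /= leqNgt hlt.
by [].
Qed.

Lemma D_lin (a b : seq vec) x y z c : (forall i, x i = c * y i + z i) ->
  D (a ++ x :: b) = c * D (a ++ y :: b) + D (a ++ z :: b).
Proof.
move=> hx; rewrite /D !size_cat /=.
case: eqP => hN; last by rewrite mulr0 addr0.
have ka : (size a < N)%N by rewrite -hN addnS ltnS leq_addr.
pose k := Ordinal ka.
have cof : forall (u v : vec) i, cofactor (Dm (a ++ u :: b)) i k = cofactor (Dm (a ++ v :: b)) i k.
  move=> u v i; rewrite /cofactor; congr (_ * \det _).
  apply/matrixP => r t; rewrite !mxE (@nth_mid_neq a b u v) //.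
  by have := neq_lift k t; rewrite -(inj_eq val_inj) /= eq_sym.
rewrite !(expand_det_col _ k) big_distrr -big_split /=; apply: eq_bigr => i _.
rewrite !mxE /= nth_mid (cof x y) (cof z y) !nth_mid hx; ring.
Qed.

Lemma D_rep (s : seq vec) i j : (i < j < size s)%N ->
  (forall t, nth v0 s i t = nth v0 s j t) -> D s = 0.
Proof.
move=> /andP [hij hjs] he; rewrite /D; case: eqP => // hN.
have hj : (j < N)%N by rewrite -hN.
have hi : (i < N)%N by exact: ltn_trans hij hj.
rewrite -det_tr (@determinant_alternate _ _ _ (Ordinal hi) (Ordinal hj)).
- by [].
- by rewrite -(inj_eq val_inj) /= neq_ltn hij.
- by move=> t; rewrite !mxE.
Qed.

Lemma D_adj (a b : seq vec) x y : (forall i, x i = y i) -> D (a ++ x :: y :: b) = 0.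
Proof.
move=> he; apply: (@D_rep _ (size a) (size a).+1).
  by rewrite size_cat /=; lia.
by move=> t; rewrite nth_mid nth_cat ltnNge leqnSn /= subSn // subnn /=.
Qed.

Lemma D_swap (a b : seq vec) x y : D (a ++ x :: y :: b) = - D (a ++ y :: x :: b).
Proof.
pose xy : vec := fun i => x i + y i.
have h0 : D (a ++ xy :: xy :: b) = 0 by apply: D_adj.
rewrite (@D_lin a (xy :: b) xy x y 1) // in h0; last by move=> i; rewrite mul1r.
have e1 : forall u, a ++ u :: xy :: b = (rcons a u) ++ xy :: b.
  by move=> u; rewrite -cats1 -catA.
rewrite !e1 !(@D_lin (rcons a _) b xy x y 1) // in h0; try by move=> i; rewrite mul1r.
have e2 : forall u v, rcons a u ++ v :: b = a ++ u :: v :: b by move=> u v; rewrite -cats1 -catA.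
rewrite !e2 !(@D_adj a b x x) // !(@D_adj a b y y) // in h0; apply/eqP; rewrite -subr_eq0 opprK; apply/eqP; rewrite -h0; ring.
Qed.

Lemma D_rot (a L : seq vec) x :
  D (a ++ x :: L) = (-1) ^+ size L * D (a ++ L ++ [:: x]).
Proof.
elim: L a => [|y L IH] a /=; first by rewrite expr0 mul1r.
rewrite D_swap.
have -> : a ++ y :: x :: L = rcons a y ++ x :: L by rewrite -cats1 -catA.
rewrite IH -cats1 -catA cat1s exprS; ring.
Qed.


Definition rmv (T : Type) (k : nat) (s : seq T) := take k s ++ drop k.+1 s.

Lemma map_rmv (T : Type) (f : T -> vec) k s : map f (rmv k s) = rmv k (map f s).
Proof. by rewrite /rmv map_cat map_take map_drop. Qed.

Lemma rmv_iota j n : (j < n)%N -> rmv j (iota 0 n) = iota 0 j ++ iota j.+1 (n - j.+1).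
Proof.
move=> hj; rewrite /rmv take_iota drop_iota add0n.
by have -> : minn j n = j by apply/minn_idPl; apply: ltnW.
Qed.

Lemma rmv_iotaS j n : (j < n)%N -> rmv j (iota 0 n.+1) = rmv j (iota 0 n) ++ [:: n].
Proof.
move=> hj; rewrite !rmv_iota // ?(ltn_trans hj) // -catA; congr (_ ++ _).
have -> : (n.+1 - j.+1 = (n - j.+1) + 1)%N by lia.
rewrite iotaD; congr (_ ++ _).
by have -> : (j.+1 + (n - j.+1) = n)%N by lia.
Qed.

Lemma rmv_last n : rmv n (iota 0 n.+1) = iota 0 n.
Proof.
rewrite /rmv take_iota drop_iota subnn /= cats0.
by have -> : minn n n.+1 = n by apply/minn_idPl; apply: leqnSn.
Qed.

Lemma iotaS0 n : iota 0 n.+1 = iota 0 n ++ [:: n].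
Proof. by rewrite -addn1 iotaD. Qed.

Lemma mapS (f : nat -> vec) n : map f (iota 0 n.+1) = map f (iota 0 n) ++ [:: f n].
Proof. by rewrite iotaS0 map_cat. Qed.

Lemma D_frame (w u : nat -> vec) r m Y : (forall l i, u l i = r * w l i + w l.+1 i) ->
  D (map w (iota 0 m.+1) ++ Y) = D (w 0%N :: map u (iota 0 m) ++ Y).
Proof.
move=> hu; elim: m Y => [|m IH] Y; first by [].
rewrite (mapS w m.+1) -catA cat1s.
rewrite (@D_lin _ _ _ (w m) (u m) (-r)); last by move=> i; rewrite hu; ring.
rewrite (mapS w m) -catA cat1s D_adj // mulr0 add0r.
by rewrite -(mapS w m) IH (mapS u m) -catA cat1s.
Qed.

Lemma sum_recr (F : nat -> C) n :
  \sum_(0 <= i < n.+1) F i = \sum_(0 <= i < n) F i + F n.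
Proof. by rewrite big_nat_recr. Qed.

Lemma D_expand (w u : nat -> vec) r m Y : (forall l i, u l i = r * w l i + w l.+1 i) ->
  D (map u (iota 0 m) ++ Y) =
  \sum_(0 <= j < m.+1) r ^+ j * D (map w (rmv j (iota 0 m.+1)) ++ Y).
Proof.
move=> hu; elim: m Y => [|m IH] Y.
  by rewrite big_nat1 expr0 mul1r.
rewrite mapS -catA cat1s IH.
rewrite [LHS]sum_recr [RHS]sum_recr [in RHS]sum_recr (rmv_last m.+1).
rewrite (rmv_iotaS (leqnn m.+1)) (rmv_last m).
rewrite (@D_lin _ _ _ (w m) (w m.+1) r) // mulrDr.
rewrite (@eq_big_nat _ _ _ 0 m _ (fun j => r ^+ j * D (map w (rmv j (iota 0 m.+2)) ++ Y))); last first.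
  move=> j /andP [_ hj].
  rewrite (@D_lin _ _ _ (w m) (w m.+1) r) // rmv_iotaS // map_cat -catA cat1s D_adj // mulr0 add0r.
  by rewrite (@rmv_iotaS j m.+1) ?(ltn_trans hj) // rmv_iotaS // !map_cat -!catA.
have e1 : D (map w (iota 0 m) ++ w m :: Y) = D (map w (iota 0 m.+1) ++ Y).
  by rewrite mapS -catA cat1s.
have e2 : D (map w (iota 0 m) ++ w m.+1 :: Y) = D (map w (iota 0 m ++ [:: m.+1]) ++ Y).
  by rewrite map_cat -catA.
rewrite e1 e2 exprS; ring.
Qed.

Lemma cof_indep (a b : seq vec) x y (k : 'I_N) r : size a = k ->
  cofactor (Dm (a ++ x :: b)) r k = cofactor (Dm (a ++ y :: b)) r k.
Proof.
move=> ha; rewrite /cofactor; congr (_ * \det _).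
apply/matrixP => r' t; rewrite !mxE (@nth_mid_neq a b x y) //.
by have := neq_lift k t; rewrite -(inj_eq val_inj) /= eq_sym ha.
Qed.

Lemma D_last (I : seq vec) : size I = N.-1 -> (0 < N)%N ->
  exists cof : 'I_N -> C, forall v, D (I ++ [:: v]) = \sum_r v r * cof r.
Proof.
move=> hI hN; have lN : (N.-1 < N)%N by rewrite prednK.
pose kl := Ordinal lN.
exists (fun r => cofactor (Dm (I ++ [:: v0])) r kl) => v.
rewrite /D size_cat /= hI addn1 prednK // eqxx (expand_det_col _ kl).
apply: eq_bigr => r _; rewrite mxE.
have -> : (kl : nat) = size I by rewrite hI.
by rewrite nth_mid (@cof_indep I [::] v v0 kl) //.
Qed.

Lemma D_split (J' : seq vec) (i : 'I_N) x : size J' = N ->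
  D (take i J' ++ x :: drop i.+1 J') = \sum_(r < N) x r * cofactor (Dm J') r i.
Proof.
move=> hJ; have hi := ltn_ord i.
have hs : size (take i J' ++ x :: drop i.+1 J') = N.
  rewrite size_cat size_takel /= ?size_drop hJ; lia.
have eJ : J' = take i J' ++ nth v0 J' i :: drop i.+1 J'.
  by rewrite -drop_nth ?hJ // cat_take_drop.
have st : size (take i J') = i by rewrite size_takel ?hJ // ltnW.
rewrite /D hs eqxx (expand_det_col _ i); apply: eq_bigr => r _.
rewrite {1}/Dm mxE nth_cat st ltnn subnn /=; congr (_ * _).
rewrite [in RHS]eJ; exact: cof_indep st.
Qed.

Lemma cramer (J' : seq vec) x (t : 'I_N) : size J' = N ->
  \sum_(0 <= i < N) nth v0 J' i t * D (take i J' ++ x :: drop i.+1 J') = D J' * x t.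
Proof.
move=> hJ; rewrite big_mkord.
under eq_bigr => i _ do rewrite D_split //.
have hD : D J' = \det (Dm J') by rewrite /D hJ eqxx.
rewrite hD.
transitivity (\sum_(r < N) x r * (Dm J' *m \adj (Dm J')) t r).
  under eq_bigr do rewrite big_distrr.
  rewrite exchange_big; apply: eq_bigr => r _; rewrite mxE big_distrr.
  by apply: eq_bigr => i _; rewrite !mxE; exact: mulrCA.
rewrite mul_mx_adj (bigD1 t) //= big1 ?addr0; last first.
  by move=> i /negbTE hi; rewrite mxE eq_sym hi mulr0.
by rewrite mxE eqxx mulr1n mulrC.
Qed.

Lemma D_GP (I J : seq vec) : size I = N.-1 -> size J = N.+1 -> (0 < N)%N ->
  \sum_(0 <= k < N.+1) (-1) ^+ k * D (rmv k J) * D (I ++ [:: nth v0 J k]) = 0.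
Proof.
move=> hI hJ hN; have [cof hcof] := D_last hI hN.
pose J' := take N J; pose x := nth v0 J N.
have sJ' : size J' = N by rewrite size_takel // hJ.
have eJ : J = J' ++ [:: x].
  by rewrite -{1}(cat_take_drop N J) (drop_nth v0) ?hJ // drop_oversize ?hJ.
have key : D J' * D (I ++ [:: x]) =
    \sum_(0 <= i < N) D (take i J' ++ x :: drop i.+1 J') * D (I ++ [:: nth v0 J' i]).
  rewrite hcof big_distrr /=.
  under eq_bigr do rewrite mulrA -cramer //.
  under eq_bigr do rewrite big_distrl /=.
  rewrite exchange_big /=; apply: eq_bigr => i _.
  rewrite hcof big_distrr /=; apply: eq_bigr => r _; ring.
rewrite sum_recr.
have -> : rmv N J = J' by rewrite /rmv drop_oversize ?hJ // cats0.
rewrite (@eq_big_nat _ _ _ 0 N _ (fun i => (-1) ^+ N.-1 *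
   (D (take i J' ++ x :: drop i.+1 J') * D (I ++ [:: nth v0 J' i])))); last first.
  move=> i /andP [_ hi].
  have -> : nth v0 J i = nth v0 J' i by rewrite eJ nth_cat sJ' hi.
  have -> : rmv i J = take i J' ++ drop i.+1 J' ++ [:: x].
    rewrite /rmv eJ takel_cat ?sJ' ?(ltnW hi) // drop_cat sJ'.
    case: ltnP => h; first by [].
    have -> : i.+1 = N by apply/eqP; rewrite eqn_leq h hi.
    by rewrite subnn drop0 drop_oversize ?sJ'.
  rewrite (D_rot (take i J') (drop i.+1 J') x) size_drop sJ'.
  set e := (-1) ^+ (N - i.+1) : C.
  have ee : e * e = 1 by rewrite -exprD -signr_odd addnn odd_double.
  have -> : (-1) ^+ N.-1 = (-1) ^+ i * e :> C.
    by rewrite -exprD; congr (_ ^+ _); lia.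
  transitivity ((-1) ^+ i * (e * e) * (D (take i J' ++ drop i.+1 J' ++ [:: x]) *
     D (I ++ [:: nth v0 J' i]))); first by rewrite ee; ring.
  ring.
rewrite -big_distrr /= -key.
have -> : nth v0 J N = x by [].
have -> : (-1) ^+ N = - (-1) ^+ N.-1 :> C by rewrite -{1}(prednK hN) exprS mulN1r.
ring.
Qed.


Definition Fv (w : nat -> vec) := D (map w (cols_f N)).
Definition Gv (w : nat -> vec) := D (map w (cols_g N)).
Definition Hv (w : nat -> vec) := D (map w (cols_h N)).
Definition Sv (w : nat -> vec) := D (map w (cols_s N)).
Definition Hk (w : nat -> vec) k := D (map w (rmv k (iota 0 N.+1))).

Lemma sgnsq n : (-1) ^+ n * (-1) ^+ n = 1 :> C.
Proof. by rewrite -exprD -signr_odd addnn odd_double. Qed.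

Lemma fin (G E c : C) n : E = 0 -> G * ((-1) ^+ n * (-1) ^+ n) = c * E -> G = 0.
Proof. by move=> -> ; rewrite sgnsq mulr1 mulr0. Qed.

Lemma Hk_N w : Hk w N = Fv w.
Proof. by rewrite /Hk rmv_last. Qed.

Lemma Hk_N1 w : (0 < N)%N -> Hk w N.-1 = Gv w.
Proof.
move=> hN; rewrite /Hk /Gv /cols_g rmv_iota; last by rewrite prednK.
by rewrite prednK // subSn // subnn.
Qed.

Lemma Hk_N2 w : (1 < N)%N -> Hk w (N - 2) = Sv w.
Proof.
move=> hN; rewrite /Hk /Sv /cols_s rmv_iota; last by lia.
have -> : (N.+1 - (N - 2).+1 = 2)%N by lia.
have -> : ((N - 2).+1 = N.-1)%N by lia.
by rewrite /= prednK // ltnW.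
Qed.

Lemma Sv_1 w : N = 1%N -> Sv w = 0.
Proof.
move=> hN; rewrite /Sv /D size_map /cols_s size_cat size_iota /=.
by have -> : (N - 2 + 2 == N)%N = false by rewrite hN.
Qed.

Lemma top2 (F : nat -> C) : (0 < N)%N -> (forall k, (k < N.-1)%N -> F k = 0) ->
  \sum_(0 <= k < N.+1) F k = F N.-1 + F N.
Proof.
move=> hN hF; rewrite sum_recr -{1}(prednK hN) sum_recr.
rewrite big_nat_cond big1 ?add0r // => k /andP [/andP [_ hk] _]; exact: hF.
Qed.

Lemma top3 (F : nat -> C) : (1 < N)%N -> (forall k, (k < N - 2)%N -> F k = 0) ->
  \sum_(0 <= k < N.+1) F k = F (N - 2)%N + F N.-1 + F N.
Proof.
move=> hN hF; rewrite sum_recr.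
have -> : N = (N - 2).+2 by lia.
rewrite sum_recr sum_recr.
have -> : (N - 2).+2.-1 = (N - 2).+1 by [].
have -> : ((N - 2).+2 - 2 = N - 2)%N by lia.
rewrite big_nat_cond big1 ?add0r // => k /andP [/andP [_ hk] _]; apply: hF; lia.
Qed.

Lemma om_kill (T : nat -> vec) k : (k < N.-1)%N ->
  D (map T (iota 0 N.-1) ++ [:: T k]) = 0.
Proof.
move=> hk; apply: (@D_rep _ k N.-1).
  by rewrite hk size_cat size_map size_iota addn1 /=.
move=> t; rewrite nth_cat size_map size_iota hk (nth_map 0%N) ?size_iota //.
by rewrite nth_iota // nth_cat size_map size_iota ltnn subnn.
Qed.

Lemma om_F (T : nat -> vec) : (0 < N)%N -> D (map T (iota 0 N.-1) ++ [:: T N.-1]) = Fv T.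
Proof. by move=> hN; rewrite -(mapS T) prednK. Qed.

Lemma om_G (T : nat -> vec) : D (map T (iota 0 N.-1) ++ [:: T N]) = Gv T.
Proof. by rewrite /Gv /cols_g map_cat. Qed.

Lemma om_H (T : nat -> vec) : D (map T (iota 0 N.-1) ++ [:: T N.+1]) = Hv T.
Proof. by rewrite /Hv /cols_h map_cat. Qed.

Lemma om_rot (T : nat -> vec) x :
  D (map T (iota 0 N.-1) ++ [:: x]) = (-1) ^+ N.-1 * D (x :: map T (iota 0 N.-1)).
Proof.
have := D_rot [::] (map T (iota 0 N.-1)) x; rewrite /= size_map size_iota => ->.
by rewrite mulrA sgnsq mul1r.
Qed.

Lemma frame0 (w u : nat -> vec) r : (0 < N)%N -> (forall l i, u l i = r * w l i + w l.+1 i) ->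
  D (w 0%N :: map u (iota 0 N.-1)) = Fv w.
Proof.
move=> hN hu; have := @D_frame w u r N.-1 [::] hu.
by rewrite !cats0 prednK // => <-.
Qed.

Lemma GPh (w T : nat -> vec) : (0 < N)%N ->
  \sum_(0 <= k < N.+1) (-1) ^+ k * Hk w k * D (map T (iota 0 N.-1) ++ [:: w k]) = 0.
Proof.
move=> hN; have := @D_GP (map T (iota 0 N.-1)) (map w (iota 0 N.+1)).
rewrite !size_map !size_iota => /(_ erefl erefl hN) H; rewrite -[RHS]H.
apply: eq_big_nat => k /andP [_ hk].
by rewrite /Hk map_rmv (nth_map 0%N) ?size_iota // nth_iota.
Qed.

Lemma wsum (w u : nat -> vec) r (a : nat -> C) a0 X : (0 < N)%N ->
  (forall l i, u l i = r * w l i + w l.+1 i) ->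
  (forall k, (k < N)%N -> a k = (-r) ^+ k * a0) -> a N = X + (-r) ^+ N * a0 ->
  \sum_(0 <= k < N.+1) (-1) ^+ k * Hk w k * a k = a0 * Fv u + (-1) ^+ N * Fv w * X.
Proof.
move=> hN hu ha haN.
have := @D_expand w u r N [::] hu; rewrite cats0 => hF.
rewrite /Fv /cols_f hF sum_recr [in RHS]sum_recr haN Hk_N /Fv /cols_f rmv_last cats0.
rewrite (@eq_big_nat _ _ _ 0 N _ (fun k => a0 * (r ^+ k * D (map w (rmv k (iota 0 N.+1)) ++ [::])))).
  rewrite -mulr_sumr (exprNn r N); set s := (-1) ^+ N : C.
  transitivity (a0 * \sum_(0 <= i < N) r ^+ i * D (map w (rmv i (iota 0 N.+1)) ++ [::]) +
     s * D (map w (iota 0 N)) * X + (s * s) * a0 * r ^+ N * D (map w (iota 0 N))).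
    ring.
  rewrite sgnsq; ring.
move=> k /andP [_ hk]; rewrite ha // (exprNn r k) cats0 /Hk.
transitivity (((-1) ^+ k * (-1) ^+ k) * a0 * r ^+ k * D (map w (rmv k (iota 0 N.+1)))).
  ring.
rewrite sgnsq; ring.
Qed.


End Dets.

Section Ids.
Variables (C : fieldType) (N : nat).
Local Notation vec := (vec C N).
Local Notation D := (@D C N).
Local Notation Fv := (@Fv C N).
Local Notation Gv := (@Gv C N).
Local Notation Hv := (@Hv C N).
Local Notation Sv := (@Sv C N).
Local Notation Hk := (@Hk C N).
Local Notation z0 := (@v0 C N).

Lemma sgn_pred n : (0 < n)%N -> (-1) ^+ n = - (-1) ^+ n.-1 :> C.
Proof. by case: n => // n _; rewrite exprS mulN1r. Qed.

Lemma dAKP (w xi eta T : nat -> vec) r1 r2 : (0 < N)%N ->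
  (forall l i, xi l i = r1 * w l i + w l.+1 i) ->
  (forall l i, eta l i = r2 * w l i + w l.+1 i) ->
  (forall l i, T l i = r2 * xi l i + xi l.+1 i) ->
  (r1 - r2) * (Fv xi * Fv eta - Fv w * Fv T) + Fv xi * Gv eta - Fv eta * Gv xi = 0.
Proof.
move=> hN hxi heta hT.
set I := map eta (iota 0 N.-1).
have GP := @GPh C N xi eta hN; rewrite -/I in GP.
have omxi : forall k, D (I ++ [:: xi k]) = (r1 - r2) * D (I ++ [:: w k]) + D (I ++ [:: eta k]).
  by move=> k; apply: D_lin => i; rewrite hxi heta; ring.
have arec : forall k, D (I ++ [:: w k.+1]) = (- r2) * D (I ++ [:: w k]) + D (I ++ [:: eta k]).
  by move=> k; apply: D_lin => i; rewrite heta; ring.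
have alow : forall k, (k < N)%N -> D (I ++ [:: w k]) = (- r2) ^+ k * D (I ++ [:: w 0%N]).
  elim=> [|k IH] hk; first by rewrite expr0 mul1r.
  rewrite arec IH ?(ltnW hk) // om_kill; last by rewrite -ltnS prednK.
  rewrite exprS; ring.
have aN : D (I ++ [:: w N.-1.+1]) = Fv eta + (- r2) ^+ N.-1.+1 * D (I ++ [:: w 0%N]).
  rewrite arec exprS alow; last by rewrite prednK.
  rewrite om_F //; ring.
rewrite prednK // in aN.
have a0 : D (I ++ [:: w 0%N]) = (-1) ^+ N.-1 * Fv w.
  by rewrite om_rot (frame0 hN heta).
rewrite (@eq_big_nat _ _ _ 0 N.+1 _ (fun k => (r1 - r2) * ((-1) ^+ k * Hk xi k * D (I ++ [:: w k]))
   + (-1) ^+ k * Hk xi k * D (I ++ [:: eta k]))) in GP; last first.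
  by move=> k _; rewrite omxi; ring.
rewrite big_split /= -mulr_sumr in GP.
rewrite (@wsum C N xi T r2 (fun k => D (I ++ [:: w k])) _ (Fv eta) hN hT alow aN) in GP.
rewrite (@top2 C N (fun k => (-1) ^+ k * Hk xi k * D (I ++ [:: eta k])) hN) in GP; last first.
  by move=> k hk; rewrite om_kill // mulr0.
rewrite om_F // om_G Hk_N Hk_N1 // a0 in GP.

rewrite (sgn_pred hN) in GP.
apply: (fin (n := N.-1) (c := - (-1) ^+ N.-1) GP); ring.
Qed.

Lemma exprSp (x : C) n : (0 < n)%N -> x ^+ n = x * x ^+ n.-1.
Proof. by case: n => // n _; rewrite exprS. Qed.

Lemma recur (om : vec -> C) (x y : nat -> vec) r : (0 < N)%N ->
  (forall k, om (x k.+1) = - r * om (x k) + om (y k)) ->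
  (forall k, (k < N.-1)%N -> om (y k) = 0) ->
  (forall k, (k < N)%N -> om (x k) = (- r) ^+ k * om (x 0%N)) /\
  om (x N) = om (y N.-1) + (- r) ^+ N * om (x 0%N).
Proof.
move=> hN hrec hy.
have low : forall k, (k < N)%N -> om (x k) = (- r) ^+ k * om (x 0%N).
  elim=> [|k IH] hk; first by rewrite expr0 mul1r.
  rewrite hrec IH ?(ltnW hk) // hy; last by rewrite -ltnS prednK.
  rewrite exprS; ring.
split=> //; have := hrec N.-1; rewrite prednK // => ->.
rewrite low ?prednK // ?ltn_predL // (exprSp (- r) hN); ring.
Qed.

Lemma rmv_catr (T : Type) k (L M : seq T) : (k < size L)%N -> rmv k (L ++ M) = rmv k L ++ M.
Proof.
move=> hk; rewrite /rmv takel_cat ?(ltnW hk) // drop_cat -catA.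
case: ltnP => h; first by [].
have -> : k.+1 = size L by apply/eqP; rewrite eqn_leq h hk.
by rewrite subnn drop0 drop_oversize.
Qed.

Lemma top1 (F : nat -> C) : (0 < N)%N -> (forall k, (k < N.-1)%N -> F k = 0) ->
  \sum_(0 <= k < N) F k = F N.-1.
Proof.
move=> hN hF; rewrite -{1}(prednK hN) sum_recr.
rewrite big_nat_cond big1 ?add0r // => k /andP [/andP [_ hk] _]; exact: hF.
Qed.

Lemma id3 (w xi eta T : nat -> vec) r1 r2 : (0 < N)%N ->
  (forall l i, xi l i = r1 * w l i + w l.+1 i) ->
  (forall l i, eta l i = r2 * w l i + w l.+1 i) ->
  (forall l i, T l i = r2 * xi l i + xi l.+1 i) ->
  Fv xi * (r2 ^+ 2 * Fv eta - r2 * Gv eta + Hv eta) + r1 * Fv xi * (Gv eta - r2 * Fv eta)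
  - (r1 - r2) * Fv w * (Gv T - r2 * Fv T) - Fv eta * Hv xi = 0.
Proof.
move=> hN hxi heta hT.
set I := map eta (iota 0 N.-1).
set I2 := map T (iota 0 N.-1).
set J := map xi (iota 0 N ++ [:: N.+1]).
have sI : size I = N.-1 by rewrite size_map size_iota.
have sJ : size J = N.+1 by rewrite size_map size_cat size_iota addn1.
have GP := D_GP sI sJ hN.
rewrite sum_recr in GP.
have eR : rmv N J = map xi (iota 0 N).
  rewrite /J -map_rmv /rmv take_cat size_iota ltnn subnn take0 cats0.
  by rewrite drop_oversize ?size_cat ?size_iota ?addn1 // cats0.
have eX : nth (z0) J N = xi N.+1.
  by rewrite /J (nth_map 0%N) ?size_cat ?size_iota ?addn1 // nth_cat size_iota ltnn subnn.
rewrite eR eX in GP.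
have omxi : forall k, D (I ++ [:: xi k]) = (r1 - r2) * D (I ++ [:: w k]) + D (I ++ [:: eta k]).
  by move=> k; apply: D_lin => i; rewrite hxi heta; ring.
have arec : forall k, D (I ++ [:: w k.+1]) = - r2 * D (I ++ [:: w k]) + D (I ++ [:: eta k]).
  by move=> k; apply: D_lin => i; rewrite heta; ring.
have [alow aN] := @recur (fun v => D (I ++ [:: v])) w eta r2 hN arec (fun k hk => om_kill eta hk).
rewrite /= om_F // in aN.
have crec : forall k, D (I2 ++ [:: xi k.+1]) = - r2 * D (I2 ++ [:: xi k]) + D (I2 ++ [:: T k]).
  by move=> k; apply: D_lin => i; rewrite hT; ring.
have [clow cN] := @recur (fun v => D (I2 ++ [:: v])) xi T r2 hN crec (fun k hk => om_kill T hk).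
rewrite /= om_F // in cN.
have a0 : D (I ++ [:: w 0%N]) = (-1) ^+ N.-1 * Fv w by rewrite om_rot (frame0 hN heta).
have c0 : D (I2 ++ [:: xi 0%N]) = (-1) ^+ N.-1 * Fv xi by rewrite om_rot (frame0 hN hT).
set a00 := D (I ++ [:: w 0%N]) in alow aN a0.
set Y := [:: xi N.+1].
rewrite (@eq_big_nat _ _ _ 0 N _ (fun i => (r1 - r2) * a00 * (r2 ^+ i * D (map xi (rmv i (iota 0 N)) ++ Y))
   + (-1) ^+ i * D (map xi (rmv i (iota 0 N)) ++ Y) * D (I ++ [:: eta i]))) in GP; last first.
  move=> i /andP [_ hi].
  rewrite /J -map_rmv rmv_catr ?size_iota // map_cat.
  rewrite (nth_map 0%N) ?size_cat ?size_iota ?addn1 ?(ltn_trans hi) // nth_cat size_iota hi nth_iota //.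
  rewrite add0n omxi alow // (exprNn r2 i).
  transitivity ((r1 - r2) * a00 * ((-1) ^+ i * (-1) ^+ i) * (r2 ^+ i * D (map xi (rmv i (iota 0 N)) ++ Y)) +
     (-1) ^+ i * D (map xi (rmv i (iota 0 N)) ++ Y) * D (I ++ [:: eta i])); first by ring.
  by rewrite sgnsq mulr1.
rewrite big_split /= -mulr_sumr in GP.
have hE := @D_expand C N xi T r2 N.-1 Y hT; rewrite prednK // -/I2 in hE.
rewrite -hE in GP.
rewrite (@top1 (fun i => (-1) ^+ i * D (map xi (rmv i (iota 0 N)) ++ Y) * D (I ++ [:: eta i])) hN) in GP;
  last by move=> k hk; rewrite om_kill // mulr0.
have eL : rmv N.-1 (iota 0 N) = iota 0 N.-1 by rewrite -{2}(prednK hN) rmv_last.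
rewrite eL om_H om_F // in GP.
have eo : D (I ++ [:: xi N.+1]) = (r1 - r2) * D (I ++ [:: w N.+1]) + Hv eta by rewrite omxi om_H.
rewrite eo arec om_G aN in GP.
have eo2 : D (I2 ++ Y) = - r2 * D (I2 ++ [:: xi N]) + Gv T by rewrite crec om_G.
rewrite eo2 cN c0 a0 (sgn_pred hN) in GP.
rewrite (exprSp (- r2) hN) in GP.
change (D (map xi (iota 0 N))) with (Fv xi) in GP.
apply: (fin (n := N.-1) (c := - (-1) ^+ N.-1) GP); ring.
Qed.

Lemma peel2 (F : nat -> C) : (0 < N)%N ->
  \sum_(0 <= k < N.+1) F k = \sum_(0 <= k < N.-1) F k + F N.-1 + F N.
Proof. by move=> hN; rewrite sum_recr -{1}(prednK hN) sum_recr. Qed.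

Lemma lowpart (F : nat -> C) : (1 < N)%N -> (forall k, (k < N - 2)%N -> F k = 0) ->
  \sum_(0 <= k < N.-1) F k = F (N - 2)%N.
Proof.
move=> hN hF; have -> : N.-1 = (N - 2).+1 by lia.
rewrite sum_recr big_nat_cond big1 ?add0r // => k /andP [/andP [_ hk] _]; exact: hF.
Qed.

Lemma sgn2 n : (1 < n)%N -> (-1) ^+ (n - 2) = (-1) ^+ n :> C.
Proof. case: n => [|[|n]] // _; have -> : (n.+2 - 2 = n)%N by lia.
by rewrite !exprS !mulN1r opprK. Qed.

Lemma id5 (w xi : nat -> vec) r : (0 < N)%N ->
  (forall l i, xi l i = r * w l i + w l.+1 i) ->
  Fv xi * (r * Gv w + Hv w) - Gv xi * (r * Fv w + Gv w) + Fv w * Sv xi = 0.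
Proof.
move=> hN hxi.
set I := map w (iota 0 N.-1).
have GP := @GPh C N xi w hN; rewrite -/I in GP.
have omxi : forall k, D (I ++ [:: xi k]) = r * D (I ++ [:: w k]) + D (I ++ [:: w k.+1]).
  by move=> k; apply: D_lin => i; rewrite hxi.
rewrite peel2 // !omxi om_F // om_G om_H Hk_N Hk_N1 // in GP.
have eN : D (I ++ [:: w N.-1.+1]) = Gv w by rewrite prednK // om_G.
rewrite eN (sgn_pred hN) in GP.
have [hN2|hN1] := ltnP 1 N.
  rewrite lowpart // in GP; last first.
    by move=> k hk; rewrite omxi !om_kill; [rewrite mulr0 addr0 mulr0 | lia | lia].
  have ek : D (I ++ [:: w (N - 2)%N]) = 0 by apply: om_kill; lia.
  rewrite omxi ek mulr0 add0r in GP.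
  have e2 : (N - 2).+1 = N.-1 by lia.
  rewrite e2 om_F // Hk_N2 // sgn2 // (sgn_pred hN) in GP.
  change (D (map xi (iota 0 N))) with (Fv xi) in GP.
  apply: (fin (n := N.-1) (c := - (-1) ^+ N.-1) GP); ring.
have e1 : N = 1%N by lia.
have e0 : N.-1 = 0%N by rewrite e1.
rewrite e0 big_geq // add0r in GP.
rewrite Sv_1 // mulr0 addr0.
change (D (map xi (iota 0 N))) with (Fv xi) in GP.
apply: (fin (n := 0) (c := - 1) GP); ring.
Qed.

Lemma D_zero (a b : seq vec) : D (a ++ z0 :: b) = 0.
Proof.
have h : forall i, z0 i = 1 * z0 i + z0 i by move=> i; rewrite /v0 mul1r addr0.
have := @D_lin C N a b z0 z0 z0 1 h; rewrite mul1r => e.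
by apply: (addrI (D (a ++ z0 :: b))); rewrite addr0 -e.
Qed.

Lemma D_lin4 (a b : seq vec) x y1 y2 y3 y4 c1 c2 c3 c4 :
  (forall i, x i = c1 * y1 i + c2 * y2 i + c3 * y3 i + c4 * y4 i) ->
  D (a ++ x :: b) = c1 * D (a ++ y1 :: b) + c2 * D (a ++ y2 :: b) + c3 * D (a ++ y3 :: b)
    + c4 * D (a ++ y4 :: b).
Proof.
move=> hx.
rewrite (@D_lin C N a b x y4 (fun i => c1 * y1 i + c2 * y2 i + c3 * y3 i) c4); last by move=> i; rewrite hx; ring.
rewrite (@D_lin C N a b _ y3 (fun i => c1 * y1 i + c2 * y2 i) c3) //; last by move=> i; ring.
rewrite (@D_lin C N a b _ y2 (fun i => c1 * y1 i) c2) //; last by move=> i; ring.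
rewrite (@D_lin C N a b _ y1 z0 c1) //; last by move=> i; rewrite /v0; ring.
rewrite D_zero; ring.
Qed.

Lemma D_scale (a b : seq vec) x y c : (forall i, x i = c * y i) ->
  D (a ++ x :: b) = c * D (a ++ y :: b).
Proof.
move=> hx; rewrite (@D_lin C N a b x y z0 c) ?D_zero ?addr0 // => i.
by rewrite hx /v0 addr0.
Qed.

Lemma id8 (chi xi eta T ka kp kq : nat -> vec) p q c0 c1 c2 : (0 < N)%N ->
  (forall l i, xi l i = p * chi l i + chi l.+1 i) ->
  (forall l i, eta l i = q * chi l i + chi l.+1 i) ->
  (forall l i, T l i = q * xi l i + xi l.+1 i) ->
  (forall l i, T l i = p * eta l i + eta l.+1 i) ->
  (forall l i, ka l i = chi l.+3 i + c2 * chi l.+2 i + c1 * chi l.+1 i + c0 * chi l i) ->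
  (forall l i, kp l i = p * ka l i + ka l.+1 i) ->
  (forall l i, kq l i = q * ka l i + ka l.+1 i) ->
  (p - q) * (Fv ka * (Hv T - (p + q - c2) * Gv T
      + (p ^+ 2 + p * q + q ^+ 2 - c2 * (p + q) + c1) * Fv T)
    - Gv ka * (Gv T - (p + q - c2) * Fv T) + Sv ka * Fv T)
  + ((- p) ^+ 3 + c2 * (- p) ^+ 2 + c1 * (- p) + c0) * Fv kp * Fv eta
  - ((- q) ^+ 3 + c2 * (- q) ^+ 2 + c1 * (- q) + c0) * Fv kq * Fv xi = 0.
Proof.
move=> hN hxi heta hT1 hT2 hka hkp hkq.
set pb := - ((- p) ^+ 3 + c2 * (- p) ^+ 2 + c1 * (- p) + c0).
set qb := - ((- q) ^+ 3 + c2 * (- q) ^+ 2 + c1 * (- q) + c0).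
set w := p + q - c2.
set I := map T (iota 0 N.-1).
have GP := @GPh C N ka T hN; rewrite -/I in GP.
have key : forall k, (p - q) * D (I ++ [:: ka k]) =
   (p - q) * D (I ++ [:: T k.+1]) + (- (p - q) * w) * D (I ++ [:: T k])
   + pb * D (I ++ [:: eta k]) + (- qb) * D (I ++ [:: xi k]).
  move=> k; rewrite -(@D_scale I [::] (fun i => (p - q) * ka k i)) //.
  apply: D_lin4 => i; rewrite !hT1 !hxi hka heta /pb /qb /w; ring.
have GP2 : \sum_(0 <= k < N.+1) ((p - q) * ((-1) ^+ k * Hk ka k *
     (D (I ++ [:: T k.+1]) - w * D (I ++ [:: T k])))
   + pb * ((-1) ^+ k * Hk ka k * D (I ++ [:: eta k]))
   + (- qb) * ((-1) ^+ k * Hk ka k * D (I ++ [:: xi k]))) = 0.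
  transitivity ((p - q) * \sum_(0 <= k < N.+1) (-1) ^+ k * Hk ka k * D (I ++ [:: ka k])).
    rewrite mulr_sumr; apply: eq_bigr => k _.
    transitivity ((-1) ^+ k * Hk ka k * ((p - q) * D (I ++ [:: ka k]))); last by ring.
    rewrite key; ring.
  by rewrite GP mulr0.
rewrite !big_split /= -!mulr_sumr in GP2.
have erec : forall k, D (I ++ [:: eta k.+1]) = - p * D (I ++ [:: eta k]) + D (I ++ [:: T k]).
  by move=> k; apply: D_lin => i; rewrite hT2; ring.
have [elow eN] := @recur (fun v => D (I ++ [:: v])) eta T p hN erec (fun k hk => om_kill T hk).
rewrite /= om_F // in eN.
have xrec : forall k, D (I ++ [:: xi k.+1]) = - q * D (I ++ [:: xi k]) + D (I ++ [:: T k]).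
  by move=> k; apply: D_lin => i; rewrite hT1; ring.
have [xlow xN] := @recur (fun v => D (I ++ [:: v])) xi T q hN xrec (fun k hk => om_kill T hk).
rewrite /= om_F // in xN.
rewrite (@wsum C N ka kp p (fun k => D (I ++ [:: eta k])) _ (Fv T) hN hkp elow eN) in GP2.
rewrite (@wsum C N ka kq q (fun k => D (I ++ [:: xi k])) _ (Fv T) hN hkq xlow xN) in GP2.
rewrite om_rot (frame0 hN hT2) om_rot (frame0 hN hT1) in GP2.
rewrite peel2 // Hk_N Hk_N1 // om_H om_G in GP2.
have eN1 : D (I ++ [:: T N.-1.+1]) = Gv T by rewrite prednK // om_G.
rewrite eN1 om_F // (sgn_pred hN) in GP2.
have [hN2|hN1] := ltnP 1 N.
  rewrite lowpart // in GP2; last first.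
    by move=> k hk; rewrite !om_kill; [rewrite mulr0 subrr mulr0 | lia | lia].
  have ek : D (I ++ [:: T (N - 2)%N]) = 0 by apply: om_kill; lia.
  have e2 : (N - 2).+1 = N.-1 by lia.
  rewrite ek e2 om_F // Hk_N2 // sgn2 // (sgn_pred hN) in GP2.
  apply: (fin (n := N.-1) (c := - (-1) ^+ N.-1) GP2); rewrite /pb /qb /w; ring.
have e1 : N = 1%N by lia.
have e0 : N.-1 = 0%N by rewrite e1.
rewrite Sv_1 // mul0r addr0.
rewrite big_nat_cond big_pred0 ?add0r in GP2; last by move=> k; rewrite e0 andbF.
apply: (fin (n := N.-1) (c := - (-1) ^+ N.-1) GP2); rewrite /pb /qb /w; ring.
Qed.

Lemma cor1 (w xi eta T : nat -> vec) r1 r2 : (0 < N)%N ->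
  (forall l i, xi l i = r1 * w l i + w l.+1 i) ->
  (forall l i, eta l i = r2 * w l i + w l.+1 i) ->
  (forall l i, T l i = r2 * xi l i + xi l.+1 i) ->
  Fv xi * (r1 * Fv eta + Gv eta) - (r1 - r2) * Fv w * Fv T - (r2 * Fv xi + Gv xi) * Fv eta = 0.
Proof.
move=> hN hxi heta hT; have := dAKP hN hxi heta hT.
move: (Fv xi) (Fv eta) (Fv w) (Fv T) (Gv eta) (Gv xi) => A B E F G H e.
by rewrite -e; ring.
Qed.

End Ids.

Lemma alg8 (C : fieldType) (p q b a1 a2 a3 Dd f s g F3 G3 H3 ft fh fhd ftd : C) :
  Dd != 0 -> p - b != 0 -> q - b != 0 ->
  (p - q) * (Dd * f * (H3 - (p + q - (a3 - b)) * G3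
      + (p ^+ 2 + p * q + q ^+ 2 - (a3 - b) * (p + q) + (a2 - b * (a3 - b))) * F3)
    - Dd * g * (G3 - (p + q - (a3 - b)) * F3) + Dd * s * F3)
  + ((- p) ^+ 3 + (a3 - b) * (- p) ^+ 2 + (a2 - b * (a3 - b)) * (- p)
     + (a1 - b * (a2 - b * (a3 - b)))) * (Dd * ft) * fhd
  - ((- q) ^+ 3 + (a3 - b) * (- q) ^+ 2 + (a2 - b * (a3 - b)) * (- q)
     + (a1 - b * (a2 - b * (a3 - b)))) * (Dd * fh) * ftd = 0 ->
  (Hf a2 a3 p q * f * F3 + s * F3 + (p + q - a3) * g * F3
     - ((p + q - a3) * f + g) * (G3 - b * F3) + f * (H3 - b * G3 + b ^+ 2 * F3)) * (p - q)
  - Gf a1 a2 a3 (- p) (- b) / (p - b) * ft * fhd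
  + Gf a1 a2 a3 (- q) (- b) / (q - b) * fh * ftd = 0.
Proof.
move=> hD hp hq H.
have ep : Gf a1 a2 a3 (- p) (- b) / (p - b) = - ((- p) ^+ 3 + (a3 - b) * (- p) ^+ 2
    + (a2 - b * (a3 - b)) * (- p) + (a1 - b * (a2 - b * (a3 - b)))).
  by apply: (mulIf hp); rewrite mulfVK // /Gf; ring.
have eq : Gf a1 a2 a3 (- q) (- b) / (q - b) = - ((- q) ^+ 3 + (a3 - b) * (- q) ^+ 2
    + (a2 - b * (a3 - b)) * (- q) + (a1 - b * (a2 - b * (a3 - b)))).
  by apply: (mulIf hq); rewrite mulfVK // /Gf; ring.
rewrite ep eq; apply: (mulIf hD); rewrite mul0r -H /Hf; ring.
Qed.


Section Conn.
Variables (C : fieldType) (N : nat) (rho om : 'I_N -> 'I_4 -> C) (p q a b : C) (al : int).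
Hypothesis hnz : forall s j, [/\ p - om s j != 0, q - om s j != 0,
                   a - om s j != 0 & b - om s j != 0].

Definition Ps (n m be : int) : nat -> vec C N := fun l s => psi rho om p q a b n m al be l s.

Lemma casorE cols n m be : casor rho om p q a b al cols n m be = D (map (Ps n m be) cols).
Proof.
rewrite /casor /D size_map; case: eqP => // hs; congr (\det _).
by apply/matrixP => i j; rewrite !mxE (nth_map 0%N) // hs.
Qed.

Lemma PsN n m be l s : Ps (n + 1%:Z) m be l s = p * Ps n m be l s + Ps n m be l.+1 s.
Proof.
rewrite /Ps /psi.
transitivity (\sum_(j < 4) (p * (rho s j * (- om s j) ^+ l * (p - om s j) ^ n * (q - om s j) ^ m
   * (a - om s j) ^ al * (b - om s j) ^ be) + rho s j * (- om s j) ^+ l.+1 * (p - om s j) ^ n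
   * (q - om s j) ^ m * (a - om s j) ^ al * (b - om s j) ^ be)).
  apply: eq_bigr => j _; have [h1 _ _ _] := hnz s j.
  rewrite expfzDr // expr1z exprS; ring.
by rewrite big_split mulr_sumr.
Qed.

Lemma PsM n m be l s : Ps n (m + 1%:Z) be l s = q * Ps n m be l s + Ps n m be l.+1 s.
Proof.
rewrite /Ps /psi.
transitivity (\sum_(j < 4) (q * (rho s j * (- om s j) ^+ l * (p - om s j) ^ n * (q - om s j) ^ m
   * (a - om s j) ^ al * (b - om s j) ^ be) + rho s j * (- om s j) ^+ l.+1 * (p - om s j) ^ n
   * (q - om s j) ^ m * (a - om s j) ^ al * (b - om s j) ^ be)).
  apply: eq_bigr => j _; have [_ h1 _ _] := hnz s j.
  rewrite expfzDr // expr1z exprS; ring.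
by rewrite big_split mulr_sumr.
Qed.

Lemma PsB n m be l s : Ps n m (be + 1%:Z) l s = b * Ps n m be l s + Ps n m be l.+1 s.
Proof.
rewrite /Ps /psi.
transitivity (\sum_(j < 4) (b * (rho s j * (- om s j) ^+ l * (p - om s j) ^ n * (q - om s j) ^ m
   * (a - om s j) ^ al * (b - om s j) ^ be) + rho s j * (- om s j) ^+ l.+1 * (p - om s j) ^ n
   * (q - om s j) ^ m * (a - om s j) ^ al * (b - om s j) ^ be)).
  apply: eq_bigr => j _; have [_ _ _ h1] := hnz s j.
  rewrite expfzDr // expr1z exprS; ring.
by rewrite big_split mulr_sumr.
Qed.

Lemma D_rowscale (d : 'I_N -> C) (w : nat -> vec C N) cols :
  D (map (fun l i => d i * w l i) cols) = (\prod_i d i) * D (map w cols).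
Proof.
rewrite /D !size_map; case: eqP => hs; last by rewrite mulr0.
have -> : Dm (map (fun l i => d i * w l i) cols) = diag_mx (\row_i d i) *m Dm (map w cols).
  rewrite mul_diag_mx; apply/matrixP => i j; rewrite !mxE.
  by rewrite !(nth_map 0%N) ?hs // mxE.
by rewrite det_mulmx det_diag; congr (_ * _); apply: eq_bigr => i _; rewrite mxE.
Qed.


Variables (a1 a2 a3 : C) (k : 'I_N -> C).
Hypothesis hG : forall s w, Gf a1 a2 a3 (- w) (- k s) = \prod_(j < 4) (w - om s j).

Definition Pp (x : C) := x ^+ 4 + a3 * x ^+ 3 + a2 * x ^+ 2 + a1 * x.
Definition c2 := a3 - b.
Definition c1 := a2 - b * c2.
Definition c0 := a1 - b * c1.
Definition dd (s : 'I_N) := Pp (- k s) - Pp (- b).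

Lemma root s j : Gf a1 a2 a3 (- om s j) (- k s) = 0.
Proof. by rewrite hG (bigD1 j) //= subrr mul0r. Qed.

Lemma dd_neq0 s : dd s != 0.
Proof.
have -> : dd s = - Gf a1 a2 a3 (- b) (- k s) by rewrite /dd /Pp /Gf; ring.
rewrite oppr_eq0 hG; apply/prodf_neq0 => j _.
by have [_ _ _ h] := hnz s j.
Qed.

Lemma disp n m be l s :
  Ps n m (be + 1%:Z) l.+3 s + c2 * Ps n m (be + 1%:Z) l.+2 s
  + c1 * Ps n m (be + 1%:Z) l.+1 s + c0 * Ps n m (be + 1%:Z) l s = dd s * Ps n m be l s.
Proof.
rewrite /Ps /psi.
set T := fun (be' : int) (l' : nat) (j : 'I_4) => rho s j * (- om s j) ^+ l' * (p - om s j) ^ n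
   * (q - om s j) ^ m * (a - om s j) ^ al * (b - om s j) ^ be'.
transitivity (\sum_(j < 4) (T (be + 1%:Z) l.+3 j + c2 * T (be + 1%:Z) l.+2 j
   + c1 * T (be + 1%:Z) l.+1 j + c0 * T (be + 1%:Z) l j)).
  by rewrite !big_split /= -!mulr_sumr.
rewrite mulr_sumr; apply: eq_bigr => j _.
have [_ _ _ h1] := hnz s j.
transitivity (dd s * T be l j + T be l j * Gf a1 a2 a3 (- om s j) (- k s)); last first.
  by rewrite root mulr0 addr0.
rewrite /T expfzDr // expr1z !exprS /dd /Pp /Gf /c0 /c1 /c2; ring.
Qed.
End Conn.

Unset Implicit Arguments.
Local Open Scope complex_scope.

Theorem theorem4p3 (R : realType) (a1 a2 a3 p q a b : R[i])
  (N : nat) (k : 'I_N -> R[i]) (om rho : 'I_N -> 'I_4 -> R[i]) (al : int) :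
  (0 < N)%N ->
  (* p, q, a, b pairwise distinct *)
  p != q -> p != a -> p != b -> q != a -> q != b -> a != b ->
  (* om s 0..3 are the four roots (with multiplicity) in w of G(-w,-k_s) = 0,     the last one being k_s *)
  (forall s w, Gf a1 a2 a3 (- w) (- k s) = \prod_(j < 4) (w - om s j)) ->
  (forall s, om s ord_max = k s) ->
  (* the bases of the integer powers in psi are nonzero, so psi is defined *)
  (forall s j, [/\ p - om s j != 0, q - om s j != 0,
                   a - om s j != 0 & b - om s j != 0]) ->
  let f := casor rho om p q a b al (cols_f N) in
  let g := casor rho om p q a b al (cols_g N) in
  let h := casor rho om p q a b al (cols_h N) in
  let s := casor rho om p q a b al (cols_s N) in
  let pb := Gf a1 a2 a3 (- p) (- b) / (p - b) in
  let qb := Gf a1 a2 a3 (- q) (- b) / (q - b) in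
  forall n m be : int,
  let F := fun (F0 : int -> int -> int -> R[i]) (i j l : nat) =>
             F0 (n + i%:Z) (m + j%:Z) (be + l%:Z) in
  (* F f i j l = f(n+i, m+j, beta+l): i = tilde, j = hat, l = dot *)
  (F f 1%N 0%N 0%N * (p * F f 0%N 0%N 1%N + F g 0%N 0%N 1%N) - (p - b) * F f 0%N 0%N 0%N * F f 1%N 0%N 1%N
        - (b * F f 1%N 0%N 0%N + F g 1%N 0%N 0%N) * F f 0%N 0%N 1%N = 0) /\
      (      F f 0%N 1%N 0%N * (q * F f 0%N 0%N 1%N + F g 0%N 0%N 1%N) - (q - b) * F f 0%N 0%N 0%N * F f 0%N 1%N 1%N
        - (b * F f 0%N 1%N 0%N + F g 0%N 1%N 0%N) * F f 0%N 0%N 1%N = 0) /\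
      (      F f 1%N 0%N 0%N * (b ^+ 2 * F f 0%N 0%N 1%N - b * F g 0%N 0%N 1%N + F h 0%N 0%N 1%N)
        + p * F f 1%N 0%N 0%N * (F g 0%N 0%N 1%N - b * F f 0%N 0%N 1%N)
        - (p - b) * F f 0%N 0%N 0%N * (F g 1%N 0%N 1%N - b * F f 1%N 0%N 1%N)
        - F f 0%N 0%N 1%N * F h 1%N 0%N 0%N = 0) /\
      (      F f 0%N 1%N 0%N * (b ^+ 2 * F f 0%N 0%N 1%N - b * F g 0%N 0%N 1%N + F h 0%N 0%N 1%N)
        + q * F f 0%N 1%N 0%N * (F g 0%N 0%N 1%N - b * F f 0%N 0%N 1%N)
        - (q - b) * F f 0%N 0%N 0%N * (F g 0%N 1%N 1%N - b * F f 0%N 1%N 1%N)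
        - F f 0%N 0%N 1%N * F h 0%N 1%N 0%N = 0) /\
      (      F f 1%N 0%N 0%N * (p * F g 0%N 0%N 0%N + F h 0%N 0%N 0%N) - F g 1%N 0%N 0%N * (p * F f 0%N 0%N 0%N + F g 0%N 0%N 0%N)
        + F f 0%N 0%N 0%N * F s 1%N 0%N 0%N = 0) /\
      (      F f 0%N 1%N 0%N * (q * F g 0%N 0%N 0%N + F h 0%N 0%N 0%N) - F g 0%N 1%N 0%N * (q * F f 0%N 0%N 0%N + F g 0%N 0%N 0%N)
        + F f 0%N 0%N 0%N * F s 0%N 1%N 0%N = 0) /\
      ((p - q) * (F f 1%N 0%N 0%N * F f 0%N 1%N 0%N - F f 0%N 0%N 0%N * F f 1%N 1%N 0%N)
        + F f 1%N 0%N 0%N * F g 0%N 1%N 0%N - F f 0%N 1%N 0%N * F g 1%N 0%N 0%N = 0) /\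
      (      (Hf a2 a3 p q * F f 0%N 0%N 0%N * F f 1%N 1%N 1%N + F s 0%N 0%N 0%N * F f 1%N 1%N 1%N
        + (p + q - a3) * F g 0%N 0%N 0%N * F f 1%N 1%N 1%N
        - ((p + q - a3) * F f 0%N 0%N 0%N + F g 0%N 0%N 0%N) * (F g 1%N 1%N 1%N - b * F f 1%N 1%N 1%N)
        + F f 0%N 0%N 0%N * (F h 1%N 1%N 1%N - b * F g 1%N 1%N 1%N + b ^+ 2 * F f 1%N 1%N 1%N)) * (p - q)
        - pb * F f 1%N 0%N 0%N * F f 0%N 1%N 1%N + qb * F f 0%N 1%N 0%N * F f 1%N 0%N 1%N = 0).
Proof.
move=> hN hpq hpa hpb hqa hqb hab hG hk hnz f g h s pb qb n m be F.
rewrite /F /f /g /h /s /pb /qb !casorE.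
have z : forall x : int, x + 0%:Z = x by move=> x; rewrite addr0.
rewrite !z.
pose hN' := PsN rho al hnz; pose hM' := PsM rho al hnz; pose hB' := PsB rho al hnz.
split; first exact: (cor1 hN (hN' n m be) (hB' n m be) (hB' (n + 1%:Z) m be)).
split; first exact: (cor1 hN (hM' n m be) (hB' n m be) (hB' n (m + 1%:Z) be)).
split; first exact: (id3 hN (hN' n m be) (hB' n m be) (hB' (n + 1%:Z) m be)).
split; first exact: (id3 hN (hM' n m be) (hB' n m be) (hB' n (m + 1%:Z) be)).
split; first exact: (id5 hN (hN' n m be)).
split; first exact: (id5 hN (hM' n m be)).
split; first exact: (dAKP hN (hN' n m be) (hM' n m be) (hM' (n + 1%:Z) m be)).
have hka := fun l i => esym (disp rho al hnz hG n m be l i).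
have hkp : forall l i, dd b a1 a2 a3 k i * Ps rho om p q a b al (n + 1%:Z) m be l i =
    p * (dd b a1 a2 a3 k i * Ps rho om p q a b al n m be l i)
    + dd b a1 a2 a3 k i * Ps rho om p q a b al n m be l.+1 i.
  by move=> l i; rewrite hN'; ring.
have hkq : forall l i, dd b a1 a2 a3 k i * Ps rho om p q a b al n (m + 1%:Z) be l i =
    q * (dd b a1 a2 a3 k i * Ps rho om p q a b al n m be l i)
    + dd b a1 a2 a3 k i * Ps rho om p q a b al n m be l.+1 i.
  by move=> l i; rewrite hM'; ring.
have H8 := id8 hN (hN' n m (be + 1%:Z)) (hM' n m (be + 1%:Z)) (hM' (n + 1%:Z) m (be + 1%:Z))
   (hN' n (m + 1%:Z) (be + 1%:Z)) hka hkp hkq.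
rewrite /Fv /Gv /Hv /Sv !D_rowscale /c0 /c1 /c2 in H8.
have hD : \prod_i dd b a1 a2 a3 k i != 0.
  by apply/prodf_neq0 => i _; exact: (dd_neq0 hnz hG).
have hpb' : p - b != 0 by rewrite subr_eq0.
have hqb' : q - b != 0 by rewrite subr_eq0.
exact: (alg8 hD hpb' hqb' H8).
Qed.
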